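(* Let $q$ be a prime power, $m\ge1$, $g_1,\dots,g_n\in\mathbb{F}_{q^m}$ linearly independent over $\mathbb{F}_q$, $\mathbf g=(g_1,\dots,g_n)$, $\mathbf r=(r_1,\dots,r_n)\in\mathbb{F}_{q^m}^n$. Identify $[f(x)\ \ g(x)]\in\mathcal{L}_q(x,q^m)^2$ with $Q(x,y)=f(x)+g(y)$. Then the interpolation module $\mathfrak M(\mathbf r)$ consists exactly of all $Q(x,y)=f(x)+g(y)$ with $f,g\in\mathcal{L}_q(x,q^m)$ such that $Q(g_i,r_i)=0$ for $i=1,\dots,n$.
   Context: Write $[i]:=q^i$. A $q$-linearized polynomial is $f(x)=\sum_{i=0}^{d}a_ix^{[i]}$ with $a_i\in\mathbb{F}_{q^m}$; $\mathcal{L}_q(x,q^m)$ is the ring of these under addition and composition $\circ$. $\Pi_{\mathbf g}(x)=\prod_{u\in\langle g_1,\dots,g_n\rangle}(x-u)$ ($\mathbb{F}_q$-span) is the $q$-annihilator polynomial, an element of $\mathcal{L}_q(x,q^m)$. $\Lambda_{\mathbf g,\mathbf r}(x)=\sum_{i=1}^n(-1)^{n-i}r_i\det(\mathfrak D_i(\mathbf g,x))/\det(M_n(g_1,\dots,g_n))$, where $M_n(v_1,\dots,v_s)$ is the $n\times s$ matrix with $(j,l)$ entry $v_l^{[j-1]}$ and $\mathfrak D_i(\mathbf g,x)$ is $M_n(g_1,\dots,g_n,x)$ with the $i$-th column removed; it lies in $\mathcal{L}_q(x,q^m)$ and $\Lambda_{\mathbf g,\mathbf r}(g_i)=r_i$.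 The interpolation module $\mathfrak M(\mathbf r)$ is the set of all $\beta\circ[\Pi_{\mathbf g}(x)\ \ 0]+\gamma\circ[-\Lambda_{\mathbf g,\mathbf r}(x)\ \ x]$ with $\beta,\gamma\in\mathcal{L}_q(x,q^m)$, where $h\circ[f_1\ f_2]:=[h\circ f_1\ \ h\circ f_2]$. *)

(* Defs.v *)
From HB Require Import structures.
From mathcomp Require Import all_boot all_order all_algebra all_field.
Set Implicit Arguments. Unset Strict Implicit. Unset Printing Implicit Defensive.
Import GRing.Theory.
Local Open Scope ring_scope.

Definition prime_power (q : nat) : Prop :=
  exists p k : nat, prime p /\ (0 < k)%N /\ q = (p ^ k)%N.

Definition linearized (F : fieldType) (q : nat) (p : {poly F}) : Prop :=
  forall i : nat, p`_i != 0 -> exists k : nat, i = (q ^ k)%N.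

Definition in_Fq (F : fieldType) (q : nat) (c : F) : bool := c ^+ q == c.

Definition Fq_lin_indep (F : fieldType) (q n : nat) (g : 'I_n -> F) : Prop :=
  forall c : 'I_n -> F, (forall i, in_Fq q (c i)) ->
    \sum_(i < n) c i * g i = 0 -> forall i, c i = 0.

Definition Fq_span (F : finFieldType) (q n : nat) (g : 'I_n -> F) : {set F} :=
  [set u : F | [exists c : {ffun 'I_n -> F},
      [forall i, in_Fq q (c i)] && (u == \sum_(i < n) c i * g i)]].

Definition annihilator (F : finFieldType) (q n : nat) (g : 'I_n -> F) : {poly F} :=
  \prod_(u in Fq_span q g) ('X - u%:P).

(* M_n(g_1,...,g_n): (j,l) entry g_l^[j-1] (0-indexed: g_l^(q^j)) *)
Definition Moore (F : fieldType) (q n : nat) (g : 'I_n -> F) : 'M[F]_n :=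
  \matrix_(j < n, l < n) g l ^+ (q ^ j).

(* columns of M_n(g_1,...,g_n,x), x an indeterminate *)
Definition ext_col (F : fieldType) (n : nat) (g : 'I_n -> F) (l : 'I_n.+1) : {poly F} :=
  match insub (nat_of_ord l) with
  | Some l' => (g l')%:P
  | None => 'X
  end.

(* D_i(g,x): M_n(g_1,...,g_n,x) with the i-th column removed *)
Definition Dmat (F : fieldType) (q n : nat) (g : 'I_n -> F) (i : 'I_n) : 'M[{poly F}]_n :=
  \matrix_(j < n, l < n) ext_col g (lift (widen_ord (leqnSn n) i) l) ^+ (q ^ j).

(* Lambda_{g,r}(x) = sum_i (-1)^(n-i) r_i det(D_i(g,x)) / det(M_n(g)), i 1-indexed *)
Definition Lambda (F : fieldType) (q n : nat) (g r : 'I_n -> F) : {poly F} :=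
  (\det (Moore q g))^-1 *:
    \sum_(i < n) (((-1) ^+ (n - i.+1)%N * r i) *: \det (Dmat q g i)).

(* Interpolation module M(r): pairs [f1 f2] = beta o [Pi 0] + gamma o [-Lambda x]
   with beta, gamma linearized; composition h o f is  h \Po f  (= h(f(x))). *)
Definition interp_module (F : finFieldType) (q n : nat) (g r : 'I_n -> F)
    (f1 f2 : {poly F}) : Prop :=
  exists beta gamma : {poly F}, linearized q beta /\ linearized q gamma /\
    f1 = (beta \Po annihilator q g) + (gamma \Po (- Lambda q g r)) /\
    f2 = (beta \Po 0) + (gamma \Po 'X).

(* Main.v *)
Require Import Defs.
From HB Require Import structures.
From mathcomp Require Import all_boot all_order all_algebra all_field.
From mathcomp Require Import zify.
Import GRing.Theory.
Local Open Scope ring_scope.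

Lemma frobD (R : comNzRingType) (p k : nat) (x y : R) :
  p \in [pchar R] -> (x + y) ^+ (p ^ k) = x ^+ (p ^ k) + y ^+ (p ^ k).
Proof.
move=> ch; apply: exprDn_pchar.
rewrite (eq_pnat _ (pcharf_eq ch)) pnatX pnat_id ?orbT //.
exact: pcharf_prime ch.
Qed.

Lemma frobN (R : comNzRingType) (p k : nat) (x : R) :
  p \in [pchar R] -> (- x) ^+ (p ^ k) = - x ^+ (p ^ k).
Proof.
move=> ch; apply/eqP; rewrite -subr_eq0 opprK -frobD // addNr expr0n.
by rewrite eqn0Ngt expn_gt0 (prime_gt0 (pcharf_prime ch)).
Qed.

Lemma frobB (R : comNzRingType) (p k : nat) (x y : R) :
  p \in [pchar R] -> (x - y) ^+ (p ^ k) = x ^+ (p ^ k) - y ^+ (p ^ k).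
Proof. by move=> ch; rewrite frobD // frobN. Qed.

Lemma frob_sum (R : comNzRingType) (p k : nat) (I : Type) (r : seq I) (P : pred I) (f : I -> R) :
  p \in [pchar R] -> (\sum_(i <- r | P i) f i) ^+ (p ^ k) = \sum_(i <- r | P i) f i ^+ (p ^ k).
Proof.
move=> ch; apply: (big_morph (fun x => x ^+ (p ^ k))) => [x y|]; first exact: frobD.
by rewrite expr0n eqn0Ngt expn_gt0 (prime_gt0 (pcharf_prime ch)).
Qed.

Set Implicit Arguments. Unset Strict Implicit.

Section Lin.
Variables (F : fieldType) (p e : nat).
Hypotheses (ch : p \in [pchar F]) (e0 : (0 < e)%N).
Local Notation q := (p ^ e)%N.

Lemma pprime : prime p. Proof. exact: pcharf_prime ch. Qed.
Lemma q_gt1 : (1 < q)%N.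
Proof. by rewrite -(expn0 p) ltn_exp2l // prime_gt1 // pprime. Qed.
Lemma qkE k : (q ^ k = p ^ (e * k))%N. Proof. by rewrite expnM. Qed.
Lemma chP : p \in [pchar {poly F}]. Proof. by rewrite pchar_poly. Qed.

Lemma fD (R : comNzRingType) k (x y : R) : p \in [pchar R] ->
  (x + y) ^+ (q ^ k) = x ^+ (q ^ k) + y ^+ (q ^ k).
Proof. by move=> c; rewrite qkE frobD. Qed.
Lemma fN (R : comNzRingType) k (x : R) : p \in [pchar R] ->
  (- x) ^+ (q ^ k) = - x ^+ (q ^ k).
Proof. by move=> c; rewrite qkE frobN. Qed.

Lemma lin0 : linearized q (0 : {poly F}).
Proof. by move=> i; rewrite coef0 eqxx. Qed.
Lemma linD (f g : {poly F}) : linearized q f -> linearized q g -> linearized q (f + g).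
Proof.
move=> hf hg i; rewrite coefD; have [/hf //|/negbNE/eqP f0] := boolP (f`_i != 0).
by rewrite f0 add0r => /hg.
Qed.
Lemma linN (f : {poly F}) : linearized q f -> linearized q (- f).
Proof. by move=> hf i; rewrite coefN oppr_eq0 => /hf. Qed.
Lemma linB (f g : {poly F}) : linearized q f -> linearized q g -> linearized q (f - g).
Proof. by move=> hf hg; apply: linD => //; apply: linN. Qed.
Lemma linZ c (f : {poly F}) : linearized q f -> linearized q (c *: f).
Proof.
move=> hf i; rewrite coefZ; have [->|/hf] := eqVneq (f`_i) 0; first by rewrite mulr0 eqxx.
by [].
Qed.
Lemma linMC c (f : {poly F}) : linearized q f -> linearized q (f * c%:P).
Proof. by move=> hf; rewrite mulrC mul_polyC; apply: linZ. Qed.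
Lemma linXq k : linearized q ('X^(q ^ k) : {poly F}).
Proof.
move=> i; rewrite coefXn; case E: (i == _); last by rewrite eqxx.
by move=> _; exists k; apply/eqP.
Qed.
Lemma lin_sum (I : Type) (r : seq I) (P : pred I) (f : I -> {poly F}) :
  (forall i, P i -> linearized q (f i)) -> linearized q (\sum_(i <- r | P i) f i).
Proof.
move=> h; apply: (big_ind (linearized q)) => //; [exact: lin0 | exact: linD].
Qed.
Lemma lin_coef0 (f : {poly F}) : linearized q f -> f`_0 = 0.
Proof.
move=> hf; apply/eqP; apply: contraT => /hf [k] H.
have : (0 < q ^ k)%N by rewrite expn_gt0 (ltnW q_gt1).
by rewrite -H.
Qed.

Lemma lin_cases {f : {poly F}} (i : nat) : linearized q f -> f`_i = 0 \/ exists k, i = (q ^ k)%N.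
Proof. move=> hf; have [|/hf] := eqVneq (f`_i) 0; by [left | right]. Qed.

Lemma lin_pow (f : {poly F}) k : linearized q f -> linearized q (f ^+ (q ^ k)).
Proof.
move=> hf; have -> : f = \sum_(i < size f) f`_i *: 'X^i by rewrite -poly_def coefK.
rewrite qkE frob_sum ?chP //.
apply: lin_sum => i _; rewrite -qkE exprZn -exprM.
have [->|[j ->]] := lin_cases i hf.
  by rewrite expr0n expn_eq0 eqn0Ngt (ltnW q_gt1) /= scale0r; exact: lin0.
by apply: linZ; rewrite -expnD; apply: linXq.
Qed.

Lemma lin_comp (h f : {poly F}) : linearized q h -> linearized q f -> linearized q (h \Po f).
Proof.
move=> hh hf; rewrite comp_polyE; apply: lin_sum => i _.
have [->|[j ->]] := lin_cases i hh; first by rewrite scale0r; exact: lin0.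
by apply: linZ; apply: lin_pow.
Qed.

Lemma hornerLD (h : {poly F}) x y : linearized q h -> h.[x + y] = h.[x] + h.[y].
Proof.
move=> hh; rewrite !horner_coef -big_split; apply: eq_bigr => i _ /=.
have [->|[j ->]] := lin_cases i hh; first by rewrite !mul0r addr0.
by rewrite fD // mulrDr.
Qed.

Lemma Fq_pow (c : F) k : in_Fq q c -> c ^+ (q ^ k) = c.
Proof.
move=> /eqP hc; elim: k => [|k IH]; first by rewrite expn0 expr1.
by rewrite expnSr exprM IH hc.
Qed.

Lemma hornerLZ (h : {poly F}) c x : linearized q h -> in_Fq q c -> h.[c * x] = c * h.[x].
Proof.
move=> hh hc; rewrite !horner_coef mulr_sumr; apply: eq_bigr => i _ /=.
have [->|[j ->]] := lin_cases i hh; first by rewrite !mul0r mulr0.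
by rewrite exprMn Fq_pow // mulrCA.
Qed.

Lemma hornerL0 (h : {poly F}) : linearized q h -> h.[0] = 0.
Proof. by move=> hh; rewrite horner_coef0 lin_coef0. Qed.

Lemma hornerL_sum (h : {poly F}) (I : Type) (r : seq I) (P : pred I) (f : I -> F) :
  linearized q h -> h.[\sum_(i <- r | P i) f i] = \sum_(i <- r | P i) h.[f i].
Proof.
move=> hh; apply: (big_morph (fun x => h.[x])) => [x y|]; [exact: hornerLD | exact: hornerL0].
Qed.

Lemma compLD (h f g : {poly F}) : linearized q h -> h \Po (f + g) = (h \Po f) + (h \Po g).
Proof.
move=> hh; rewrite !comp_polyE -big_split; apply: eq_bigr => i _ /=.
have [->|[j ->]] := lin_cases i hh; first by rewrite !scale0r addr0.
by rewrite fD ?chP // scalerDr.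
Qed.

Lemma compLN (h f : {poly F}) : linearized q h -> h \Po (- f) = - (h \Po f).
Proof.
move=> hh; rewrite !comp_polyE -sumrN; apply: eq_bigr => i _ /=.
have [->|[j ->]] := lin_cases i hh; first by rewrite !scale0r oppr0.
by rewrite fN ?chP // scalerN.
Qed.

End Lin.


Section Card.
Variables (F : finFieldType) (p e m : nat).
Hypotheses (ch : p \in [pchar F]) (e0 : (0 < e)%N) (cardF : #|F| = ((p ^ e) ^ m)%N).
Local Notation q := (p ^ e)%N.

Lemma Fq_dvd k : ('X^q - 'X : {poly F}) %| 'X^(q ^ k) - 'X.
Proof.
elim: k => [|k IH]; first by rewrite expn0 subrr dvdp0.
have -> : ('X^(q ^ k.+1) - 'X : {poly F}) = ('X^(q ^ k) - 'X) ^+ q + ('X^q - 'X).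
  rewrite -(expn1 q) fD ?chP // fN ?chP // expn1 -exprM -expnSr.
  by rewrite addrA subrK.
apply: dvdp_add; last exact: dvdpp.
apply: dvdp_exp IH; rewrite expn_gt0 prime_gt0 //; exact: pprime ch.
Qed.

Lemma card_Fq : (q <= #|[set c : F | in_Fq q c]|)%N.
Proof.
have hd := Fq_dvd m; rewrite -cardF finField_genPoly in hd.
have [msk hm] := dvdp_prod_XsubC hd.
have szq : size ('X^q - 'X : {poly F}) = q.+1.
  rewrite size_addl size_polyXn // size_opp size_polyX ltnS.
  exact: q_gt1 ch e0.
have := eqp_size hm; rewrite szq size_prod_XsubC => -[hq]; rewrite {1}hq.
rewrite cardE; apply: uniq_leq_size. apply: mask_uniq. exact: index_enum_uniq.
move=> x xin; rewrite mem_enum inE /in_Fq.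
have : root (\prod_(i <- mask msk (index_enum F)) ('X - i%:P)) x.
  by rewrite root_prod_XsubC.
by rewrite -(eqp_root hm) /root !hornerE subr_eq0.
Qed.

Lemma Fq_sub (a b : F) : in_Fq q a -> in_Fq q b -> in_Fq q (a - b).
Proof.
move=> /eqP ha /eqP hb; apply/eqP.
by rewrite -(expn1 q) fD // fN // expn1 ha hb.
Qed.

Lemma card_span n (g : 'I_n -> F) : Fq_lin_indep q g -> (q ^ n <= #|Fq_span q g|)%N.
Proof.
move=> hind.
pose A := [set c : F | in_Fq q c].
pose D := [set c : {ffun 'I_n -> F} | [forall i, in_Fq q (c i)]].
pose phi (c : {ffun 'I_n -> F}) := \sum_(i < n) c i * g i.
have cD : #|D| = (#|A| ^ n)%N.
  have := card_ffun_on ('I_n) A; rewrite card_ord => <-; apply: eq_card => c.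
  rewrite inE; apply/forallP/ffun_onP => H i; have := H i; by rewrite inE.
have inj : {in D &, injective phi}.
  move=> c1 c2; rewrite !inE => /forallP h1 /forallP h2 he; apply/ffunP => i.
  apply/eqP; rewrite -subr_eq0; apply/eqP.
  apply: (hind (fun i => c1 i - c2 i)) => [j|]; first exact: Fq_sub.
  under eq_bigr do rewrite mulrBl.
  by rewrite sumrB /phi -/phi; apply/eqP; rewrite subr_eq0 -/(phi c1) -/(phi c2) he.
apply: (leq_trans _ (subset_leq_card (_ : [set phi x | x in D] \subset Fq_span q g))).
  rewrite card_in_imset // cD.
  by case: (posnP n) => [->|n0]; [rewrite !expn0 | rewrite leq_exp2r // card_Fq].
apply/subsetP => u /imsetP [c cin ->]; rewrite inE; apply/existsP; exists c.
by rewrite eqxx andbT; rewrite inE in cin.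
Qed.

End Card.


Section Pi.
Variables (F : finFieldType) (p e m n : nat) (g : 'I_n -> F).
Hypotheses (ch : p \in [pchar F]) (e0 : (0 < e)%N) (cardF : #|F| = ((p ^ e) ^ m)%N).
Hypothesis hind : Fq_lin_indep (p ^ e) g.
Local Notation q := (p ^ e)%N.

Lemma qgt1 : (1 < q)%N. Proof. exact: q_gt1 ch e0. Qed.
Lemma q_gt0 : (0 < q)%N. Proof. exact: ltnW qgt1. Qed.

Lemma vanish_span (h : {poly F}) : linearized q h -> (forall i, h.[g i] = 0) ->
  forall u, u \in Fq_span q g -> h.[u] = 0.
Proof.
move=> hh H u; rewrite inE => /existsP [c /andP [/forallP hc /eqP ->]].
rewrite (hornerL_sum ch e0) //; apply: big1 => i _.
by rewrite (@hornerLZ _ p e) // H mulr0.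
Qed.

Definition gg (k : nat) : F := if insub k is Some i then g i else 0.

Fixpoint Pk (k : nat) : {poly F} :=
  if k is k'.+1 then Pk k' ^+ q - ((Pk k').[gg k'] ^+ (q - 1)) *: Pk k' else 'X.

Lemma Pk_lin k : linearized q (Pk k).
Proof.
elim: k => [|k IH] /=; first by rewrite -(expr1 'X) -(expn0 q); apply: linXq.
apply: linB; last exact: linZ.
have := lin_pow ch e0 (k:=1) IH; by rewrite expn1.
Qed.

Lemma Pk_size k : size (Pk k) = (q ^ k).+1 /\ Pk k \is monic.
Proof.
elim: k => [|k [IHs IHm]] /=; first by rewrite size_polyX monicX expn0.
have mq : Pk k ^+ q \is monic by apply: monic_exp.
have sq : size (Pk k ^+ q) = (q ^ k.+1).+1.
  have := size_exp (Pk k) q; rewrite IHs /= -expnSr => <-.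
  rewrite prednK // lt0n size_poly_eq0; exact: monic_neq0.
have lt : (size (- (((Pk k).[gg k] ^+ (q - 1)) *: Pk k)) < size (Pk k ^+ q))%N.
  rewrite size_opp (leq_ltn_trans (size_scale_leq _ _)) // IHs sq ltnS.
  by rewrite ltn_exp2l ?qgt1.
split; first by rewrite size_addl.
by rewrite monicE lead_coefDl //; move: mq; rewrite monicE.
Qed.

Lemma Pk_root k j : (j < k)%N -> (Pk k).[gg j] = 0.
Proof.
elim: k => [|k IH] //= jk.
rewrite hornerD hornerN hornerZ horner_exp.
rewrite ltnS leq_eqVlt in jk; case/orP: jk => [/eqP ->|/IH ->].
  by rewrite -exprSr subn1 prednK ?q_gt0 // subrr.
by rewrite expr0n eqn0Ngt q_gt0 /= mulr0 subrr.
Qed.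

Lemma gg_val (i : 'I_n) : gg i = g i.
Proof. by rewrite /gg valK. Qed.

Lemma Pi_eq : annihilator q g = Pk n.
Proof.
have [sz mo] := Pk_size n.
have Pn0 : Pk n != 0 by apply: monic_neq0.
have rt : forall u, u \in Fq_span q g -> (Pk n).[u] = 0.
  apply: vanish_span; first exact: Pk_lin.
  by move=> i; rewrite -gg_val Pk_root.
have dv : annihilator q g %| Pk n.
  rewrite /annihilator -big_enum; apply: uniq_roots_dvdp.
    by apply/allP => u; rewrite mem_enum => /rt /eqP.
  by rewrite uniq_rootsE enum_uniq.
have szA : size (annihilator q g) = #|Fq_span q g|.+1.
  by rewrite /annihilator -big_enum size_prod_XsubC cardE.
apply/eqP; rewrite -eqp_monic //; last by rewrite /annihilator monic_prod_XsubC.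
rewrite -dvdp_size_eqp // eqn_leq dvdp_leq //= sz szA ltnS.
exact: card_span ch e0 cardF _ _ hind.
Qed.

Lemma Pi_lin : linearized q (annihilator q g).
Proof. by rewrite Pi_eq; apply: Pk_lin. Qed.

Lemma Pi_size : size (annihilator q g) = (q ^ n).+1 /\ annihilator q g \is monic.
Proof. by rewrite Pi_eq; apply: Pk_size. Qed.

Lemma Pi_root u : u \in Fq_span q g -> (annihilator q g).[u] = 0.
Proof.
by move=> uS; apply/eqP; rewrite /annihilator -big_enum -/(root _ u) root_prod_XsubC mem_enum.
Qed.

Lemma Pi_card : #|Fq_span q g| = (q ^ n)%N.
Proof.
have [sz _] := Pi_size; move: sz.
by rewrite /annihilator -big_enum size_prod_XsubC cardE => -[].
Qed.

End Pi.


Section Moore.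
Variables (F : finFieldType) (p e m n : nat) (g : 'I_n -> F).
Hypotheses (ch : p \in [pchar F]) (e0 : (0 < e)%N) (cardF : #|F| = ((p ^ e) ^ m)%N).
Hypothesis hind : Fq_lin_indep (p ^ e) g.
Local Notation q := (p ^ e)%N.

Lemma coef_qsum (a : 'I_n -> F) i :
  (\sum_(j < n) a j *: ('X^(q ^ j) : {poly F}))`_i = \sum_(j < n) a j * (i == (q ^ j)%N)%:R.
Proof. by rewrite coef_sum; apply: eq_bigr => j _; rewrite coefZ coefXn. Qed.

Lemma coef_qsum_at (a : 'I_n -> F) (k : 'I_n) :
  (\sum_(j < n) a j *: ('X^(q ^ j) : {poly F}))`_(q ^ k) = a k.
Proof.
rewrite coef_qsum (bigD1 k) //= eqxx mulr1 big1 ?addr0 // => j jk.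
case: eqP => [/(expnI (qgt1 ch e0))/val_inj/eqP|]; first by rewrite eq_sym (negbTE jk).
by rewrite mulr0.
Qed.

Lemma Moore_det : \det (Moore q g) != 0.
Proof.
apply/negP => /det0P [v v0 hv].
pose P : {poly F} := \sum_(j < n) v 0 j *: 'X^(q ^ j).
have Plin : linearized q P.
  by apply: lin_sum => j _; apply: linZ; apply: linXq.
have Pg : forall l, P.[g l] = 0.
  move=> l; have := congr1 (fun A : 'rV_n => A 0 l) hv; rewrite !mxE => <-.
  rewrite horner_sum; apply: eq_bigr => j _.
  by rewrite hornerZ hornerXn mxE.
have [j vj] : exists j, v 0 j != 0.
  apply/existsP; apply: contraR v0 => /existsPn H; apply/eqP/rowP => j.
  by rewrite mxE; apply/eqP; move: (H j); rewrite negbK.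
have P0 : P != 0.
  by apply: contraNneq vj => P0; rewrite -(coef_qsum_at (fun j => v 0 j)) -/P P0 coef0.
have szP : (size P <= (q ^ n.-1).+1)%N.
  apply/leq_sizeP => i hi; rewrite coef_qsum big1 // => k _.
  case: eqP => [hik|]; last by rewrite mulr0.
  exfalso; move: hi; rewrite hik ltnNge leq_exp2l ?(qgt1 ch e0) //.
  by rewrite -ltnS prednK ?ltn_ord // (leq_ltn_trans _ (ltn_ord k)).
have rts : all (root P) (enum (Fq_span q g)).
  apply/allP => u; rewrite mem_enum => uS; apply/eqP.
  exact: (vanish_span ch e0 Plin Pg).
have := max_poly_roots P0 rts (enum_uniq _).
rewrite -cardE (Pi_card ch e0 cardF hind) => H; have := leq_trans H szP.
have n0 : (0 < n)%N by rewrite (leq_ltn_trans _ (ltn_ord j)).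
rewrite ltnS leqNgt ltn_exp2l ?(qgt1 ch e0) //.
by rewrite prednK // leqnn.
Qed.

End Moore.


Section Lam.
Variables (F : fieldType) (p e n : nat) (g r : 'I_n -> F).
Local Notation q := (p ^ e)%N.

Definition ext_r (l : 'I_n.+1) : {poly F} :=
  match insub (nat_of_ord l) with Some l' => (r l')%:P | None => 0 end.

Definition Cmat : 'M[{poly F}]_n.+1 :=
  \matrix_(j < n.+1, l < n.+1) if (j < n)%N then ext_col g l ^+ (q ^ j) else ext_r l.

Lemma ext_col_max : ext_col g ord_max = 'X.
Proof. by rewrite /ext_col insubN // ltnn. Qed.
Lemma ext_r_max : ext_r ord_max = 0.
Proof. by rewrite /ext_r insubN // ltnn. Qed.
Lemma ext_col_lift (b : 'I_n) : ext_col g (lift ord_max b) = (g b)%:P.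
Proof.
rewrite /ext_col; have -> : (lift ord_max b : nat) = b by rewrite lift_max.
by rewrite valK.
Qed.
Lemma ext_r_lift (b : 'I_n) : ext_r (lift ord_max b) = (r b)%:P.
Proof.
rewrite /ext_r; have -> : (lift ord_max b : nat) = b by rewrite lift_max.
by rewrite valK.
Qed.
Lemma ext_col_widen (b : 'I_n) : ext_col g (widen_ord (leqnSn n) b) = (g b)%:P.
Proof. by rewrite /ext_col /= valK. Qed.
Lemma ext_r_widen (b : 'I_n) : ext_r (widen_ord (leqnSn n) b) = (r b)%:P.
Proof. by rewrite /ext_r /= valK. Qed.

Lemma sign_rel (i : 'I_n) :
  ((-1) ^+ (n + i) : {poly F}) = - (-1) ^+ (n - i.+1).
Proof.
have -> : (n + i = (n - i.+1) + (2 * i).+1)%N by have := ltn_ord i; lia.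
by rewrite exprD exprS exprM sqrrN !expr1n mulr1 mulrN1.
Qed.

Lemma numer_det :
  \sum_(i < n) (((-1) ^+ (n - i.+1)%N * r i) *: \det (Dmat q g i)) = - \det Cmat.
Proof.
rewrite (expand_det_row _ ord_max) big_ord_recr /= mxE ltnn ext_r_max mul0r addr0.
rewrite -sumrN; apply: eq_bigr => i _.
rewrite mxE ltnn ext_r_widen /cofactor.
have -> : row' ord_max (col' (widen_ord (leqnSn n) i) Cmat) = Dmat q g i.
  apply/matrixP => a b; rewrite !mxE lift_max ltn_ord.
  by [].
rewrite /= sign_rel -mul_polyC polyCM polyC_exp polyCN.
by rewrite polyC1 mulNr mulrN opprK mulrA [_%:P * _]mulrC.
Qed.


Lemma det_const k (B : 'M[{poly F}]_k) :
  (forall a b, B a b = ((B a b)`_0)%:P) -> \det B = (\det (map_mx (fun x : {poly F} => x`_0) B))%:P.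
Proof.
move=> H; have E : B = map_mx polyC (map_mx (fun x : {poly F} => x`_0) B).
  by apply/matrixP => a b; rewrite !mxE -H.
by rewrite {1}E (det_map_mx polyC).
Qed.

Lemma sign_polyC k : ((-1) ^+ k : {poly F}) = ((-1) ^+ k)%:P.
Proof. by rewrite polyC_exp polyCN polyC1. Qed.

Lemma lin_det : linearized q (\det Cmat).
Proof.
rewrite (expand_det_col _ ord_max); apply: lin_sum => j _.
rewrite mxE ext_col_max ext_r_max.
case: ifP => _; last by rewrite mul0r; apply: lin0.
rewrite /cofactor det_const.
  rewrite sign_polyC -polyCM mulrC mul_polyC; apply: linZ.
  by rewrite -[in X in linearized _ X](expr1 'X) -exprM mul1n; apply: linXq.
move=> a b; rewrite !mxE; case: ifP => _.
  by rewrite ext_col_lift -polyC_exp coefC.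
by rewrite ext_r_lift coefC.
Qed.


Lemma det_eval (k : 'I_n) : (\det Cmat).[g k] = - r k * \det (Moore q g).
Proof.
rewrite -horner_evalE -det_map_mx -det_tr.
set At := (map_mx _ Cmat)^T.
pose wk := widen_ord (leqnSn n) k.
pose B := \matrix_(a, b) if a == ord_max then At wk b else At a b.
pose Cm := \matrix_(a, b) if a == ord_max then ((b == ord_max)%:R : F) else At a b.
have wkn : wk != ord_max.
  by apply/eqP => /(congr1 val) /= hk; move: (ltn_ord k); rewrite hk ltnn.
rewrite (@determinant_multilinear _ _ At B Cm ord_max 1 (- r k)).
- have -> : \det B = 0.
    apply: (determinant_alternate wkn) => b; rewrite !mxE eqxx.
    by rewrite (negbTE wkn).
  rewrite mul1r add0r; congr (_ * _).
  rewrite (expand_det_row _ ord_max) big_ord_recr /= big1 ?add0r; last first.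
    move=> b _; rewrite mxE eqxx.
    have -> : (widen_ord (leqnSn n) b == ord_max) = false.
      by apply/negbTE/eqP => /(congr1 val) /= hb; move: (ltn_ord b); rewrite hb ltnn.
    by rewrite mul0r.
  rewrite mxE !eqxx mul1r /cofactor.
  have -> : (-1) ^+ (@ord_max n + @ord_max n)%N = 1 :> F.
    by rewrite /= addnn -mul2n exprM sqrrN !expr1n.
  rewrite mul1r -det_tr; congr (\det _); apply/matrixP => a b.
  rewrite !mxE eq_sym (negbTE (neq_lift _ _)) lift_max ltn_ord.
  by rewrite ext_col_lift rmorphXn /= ?horner_evalE hornerC.
- apply/rowP => b; rewrite !mxE eqxx mul1r ext_col_max ext_r_max /wk ext_col_widen ext_r_widen.
  case: (unliftP ord_max b) => [b'|] ->.
    rewrite eq_sym (negbTE (neq_lift _ _)) !lift_max ltn_ord /= mulr0 addr0.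
    by rewrite !rmorphXn /= ?horner_evalE hornerX hornerC.
  rewrite eqxx mulr1 ltnn /= raddf0 horner_evalE hornerC.
  by rewrite subrr.
- by apply/matrixP => a b; rewrite !mxE eq_sym (negbTE (neq_lift _ _)).
- by apply/matrixP => a b; rewrite !mxE eq_sym (negbTE (neq_lift _ _)).
Qed.


Lemma Lambda_lin : linearized q (Lambda q g r).
Proof. by rewrite /Lambda numer_det; apply: linZ; apply: linN; apply: lin_det. Qed.

Lemma Lambda_eval (k : 'I_n) : \det (Moore q g) != 0 -> (Lambda q g r).[g k] = r k.
Proof.
move=> d0; rewrite /Lambda numer_det hornerZ hornerN det_eval mulNr opprK.
by rewrite mulrCA mulVf // mulr1.
Qed.

End Lam.


Section Div.
Variables (F : finFieldType) (p e m n : nat) (g : 'I_n -> F).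
Hypotheses (ch : p \in [pchar F]) (e0 : (0 < e)%N) (cardF : #|F| = ((p ^ e) ^ m)%N).
Hypothesis hind : Fq_lin_indep (p ^ e) g.
Local Notation q := (p ^ e)%N.
Local Notation Pi := (annihilator q g).

Lemma div_step N (h : {poly F}) : (size h <= N)%N -> linearized q h ->
  exists beta rem : {poly F}, [/\ linearized q beta, linearized q rem,
    (size rem < size Pi)%N & h = (beta \Po Pi) + rem].
Proof.
have [szPi moPi] := Pi_size ch e0 cardF hind.
have linPi := Pi_lin ch e0 cardF hind.
elim: N h => [|N IH] h hs hl.
  exists 0, h; split => //; first exact: lin0.
    by rewrite (leq_ltn_trans hs) // szPi.
  by rewrite comp_poly0 add0r.
have [lt|ge] := ltnP (size h) (size Pi).
  exists 0, h; split => //; first exact: lin0.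
  by rewrite comp_poly0 add0r.
have h0 : h != 0 by rewrite -size_poly_eq0 -lt0n (leq_trans _ ge) // szPi.
have lc0 : h`_(size h).-1 != 0 by rewrite -lead_coefE lead_coef_eq0.
have [d hd] := hl _ lc0.
have nd : (n <= d)%N.
  by rewrite -(leq_exp2l _ _ (qgt1 ch e0)) -ltnS -hd prednK ?lt0n ?size_poly_eq0 // -szPi.
pose t := (d - n)%N.
pose Q := Pi ^+ (q ^ t).
have szQ : size Q = size h.
  have := size_exp Pi (q ^ t); rewrite szPi /= -expnD subnKC // -hd.
  move=> H; rewrite -[size Q]prednK ?H ?prednK ?lt0n ?size_poly_eq0 //.
  exact: monic_neq0 (monic_exp _ moPi).
have lcQ : Q`_(size h).-1 = 1.
  by rewrite -szQ -lead_coefE; apply/eqP; apply: monic_exp.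
pose h' := h - h`_(size h).-1 *: Q.
have sh' : (size h' <= N)%N.
  have hs0 : (0 < size h)%N by rewrite lt0n size_poly_eq0.
  suff : (size h' <= (size h).-1)%N.
    by move=> H; rewrite -ltnS (leq_ltn_trans H) // prednK.
  apply/leq_sizeP => j hj.
  rewrite coefB coefZ.
  rewrite leq_eqVlt in hj; case/orP: hj => [/eqP <-|hj]; first by rewrite lcQ mulr1 subrr.
  have hj' : (size h <= j)%N by rewrite -(prednK hs0).
  have hQ : (size Q <= j)%N by rewrite szQ.
  by rewrite (nth_default _ hj') (nth_default _ hQ) mulr0 subr0.
have lh' : linearized q h'.
  apply: linB => //; apply: linZ; exact: lin_pow.
have [beta [rem [lb lr sr E]]] := IH h' sh' lh'.
exists (beta + h`_(size h).-1 *: 'X^(q ^ t)), rem; split => //.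
  by apply: linD => //; apply: linZ; apply: linXq.
rewrite comp_polyD comp_polyZ comp_Xn_poly -/Q -addrA [_ *: Q + _]addrC addrA -E.
by rewrite subrK.
Qed.

Lemma g_span (i : 'I_n) : g i \in Fq_span q g.
Proof.
rewrite inE; apply/existsP; exists [ffun j => (j == i)%:R]; apply/andP; split.
  apply/forallP => j; rewrite ffunE /in_Fq; case: (j == i).
    by rewrite mulr1n expr1n.
  by rewrite mulr0n expr0n eqn0Ngt (q_gt0 ch e0).
rewrite (bigD1 i) //= ffunE eqxx mul1r big1 ?addr0 // => j ji.
by rewrite ffunE (negbTE ji) mul0r.
Qed.

Lemma lin_div (h : {poly F}) : linearized q h -> (forall i, h.[g i] = 0) ->
  exists beta, linearized q beta /\ h = beta \Po Pi.
Proof.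
move=> hl hv.
have [beta [rem [lb lr sr E]]] := div_step (leqnn _) hl.
exists beta; split => //.
suff r0 : rem = 0 by rewrite E r0 addr0.
apply/eqP; apply: contraT => r0.
have rts : all (root rem) (enum (Fq_span q g)).
  apply/allP => u; rewrite mem_enum => uS; apply/eqP.
  have : h.[u] = 0 by apply: (vanish_span ch e0 hl hv).
  rewrite E hornerD horner_comp (Pi_root uS).
  by rewrite (hornerL0 ch e0 lb) add0r.
have := max_poly_roots r0 rts (enum_uniq _).
rewrite -cardE; move: sr; have [-> _] := Pi_size ch e0 cardF hind.
rewrite (Pi_card ch e0 cardF hind) ltnS => H1 H2.
by move: (leq_ltn_trans H1 H2); rewrite ltnn.
Qed.

End Div.

Unset Implicit Arguments.

Theorem theorem21 (F : finFieldType) (q m n : nat) (g r : 'I_n -> F) :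
  prime_power q -> (0 < m)%N -> #|F| = (q ^ m)%N ->
  Fq_lin_indep q g ->
  forall f1 f2 : {poly F},
    interp_module q g r f1 f2 <->
    (linearized q f1 /\ linearized q f2 /\
     forall i : 'I_n, f1.[g i] + f2.[r i] = 0).
Proof.
move=> [p [k [pp [k0 qE]]]] m0 cardF hind f1 f2; subst q.
have ch : p \in [pchar F].
  by apply: (@card_finPcharP _ _ (k * m)) => //; rewrite cardF expnM.
have d0 := Moore_det ch k0 cardF hind.
have linL : linearized (p ^ k) (Lambda (p ^ k) g r) by apply: Lambda_lin.
have linPi : linearized (p ^ k) (annihilator (p ^ k) g) by apply: (Pi_lin ch k0 cardF hind).
split.
- move=> [beta [gamma [hb [hg [-> ->]]]]].
  rewrite comp_poly0r (lin_coef0 ch k0 hb) add0r comp_polyXr.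
  split; [|split=> //].
    by apply: linD; apply: lin_comp => //; apply: linN.
  move=> i; rewrite hornerD !horner_comp (Pi_root (g_span g ch k0 i)) (hornerL0 ch k0 hb) add0r.
  by rewrite hornerN Lambda_eval // -(hornerLD ch _ _ hg) addNr (hornerL0 ch k0 hg).
- move=> [h1 [h2 hv]].
  have hl : linearized (p ^ k) (f1 + (f2 \Po Lambda (p ^ k) g r)).
    by apply: linD => //; apply: lin_comp.
  have hz : forall i, (f1 + (f2 \Po Lambda (p ^ k) g r)).[g i] = 0.
    by move=> i; rewrite hornerD horner_comp Lambda_eval // hv.
  have [beta [hb E]] := lin_div ch k0 cardF hind hl hz.
  exists beta, f2; split=> //; split=> //; split.
    by rewrite -E (compLN ch _ h2) addrK.
  by rewrite comp_poly0r (lin_coef0 ch k0 hb) add0r comp_polyXr.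
Qed.
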